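(* Let $\alpha,\beta,\gamma,\delta,\epsilon,\zeta,\kappa,\lambda,\mu,b,c,f,m$ be parameters, and let $$A_0=\begin{pmatrix}\alpha&\beta&\gamma\\\delta&\epsilon&\zeta\\\kappa&\lambda&\mu\end{pmatrix},\qquad A_1=\begin{pmatrix}\alpha_1&\beta_1&\gamma_1\\\delta_1&\epsilon_1&\zeta_1\\\kappa_1&\lambda_1&\mu_1\end{pmatrix},$$ where $\alpha_1=2\alpha^2f-c\alpha\delta+\beta\delta b-b\alpha\epsilon$, $\beta_1=2f\alpha\beta+b\gamma\delta-c\alpha\epsilon-b\alpha\zeta$, $\gamma_1=2f\alpha\gamma-c\alpha\zeta$, $\delta_1=2m\alpha^2-2c\alpha\kappa+2b\beta\kappa-2b\alpha\lambda$, $\epsilon_1=2m\alpha\beta+2b\gamma\kappa-2c\alpha\lambda-2b\alpha\mu$, $\zeta_1=2m\alpha\gamma-2c\alpha\mu$, $\kappa_1=m\alpha\delta-2f\alpha\kappa+b\epsilon\kappa-b\delta\lambda$, $\lambda_1=m\alpha\epsilon+b\zeta\kappa-2f\alpha\lambda-b\delta\mu$, $\mu_1=m\alpha\zeta-2f\alpha\mu$. Put $\mathbf{X}=(x^2,x,1)^T$, $\mathbf{Y}=(y^2,y,1)^T$ and $I(x,y)=\dfrac{\mathbf{X}^TA_0\mathbf{Y}}{\mathbf{X}^TA_1\mathbf{Y}}$. Define $(g_1(x),g_2(x),g_3(x))^T=(A_0^T\mathbf{X})\times(A_1^T\mathbf{X})$ and the maps $$i_2:(x,y)\mapsto\left(x,\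 \frac{g_1(x)-g_2(x)y}{g_2(x)-g_3(x)y}\right),$$ $$h_1:(x,y)\mapsto\left(-\frac{(\delta y^2+\epsilon y+\zeta)x+2(\kappa y^2+\lambda y+\mu)}{2(\alpha y^2+\beta y+\gamma)x+\delta y^2+\epsilon y+\zeta},\ y\right),$$ $$h_2:(x,y)\mapsto\left(-\frac{(\delta_1 y^2+\epsilon_1 y+\zeta_1)x+2(\kappa_1 y^2+\lambda_1 y+\mu_1)}{2(\alpha_1 y^2+\beta_1 y+\gamma_1)x+\delta_1 y^2+\epsilon_1 y+\zeta_1},\ y\right).$$ Then $I\circ i_2=I$, $I\circ h_1=-I$ and $I\circ h_2=-I$.
   Context: $\times$ denotes the cross product of vectors in three-dimensional space; the entries of $(A_0^T\mathbf{X})\times(A_1^T\mathbf{X})$ are polynomials in $x$. *)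

(* Defs.v *)
From HB Require Import structures.
From mathcomp Require Import all_boot all_order all_algebra.
Set Implicit Arguments. Unset Strict Implicit. Unset Printing Implicit Defensive.
Import Order.TTheory GRing.Theory Num.Theory.
Local Open Scope ring_scope.

Definition vec3 {R : fieldType} (a b c : R) : 'cV[R]_3 :=
  \col_(i < 3) (if val i == 0%N then a else if val i == 1%N then b else c).

Definition mat3 {R : fieldType} (a11 a12 a13 a21 a22 a23 a31 a32 a33 : R)
  : 'M[R]_3 :=
  \matrix_(i < 3, j < 3)
    (if val i == 0%N then
       (if val j == 0%N then a11 else if val j == 1%N then a12 else a13)
     else if val i == 1%N then
       (if val j == 0%N then a21 else if val j == 1%N then a22 else a23)
     else
       (if val j == 0%N then a31 else if val j == 1%N then a32 else a33)).

Definition cross3 {R : fieldType} (u v : 'cV[R]_3) : 'cV[R]_3 :=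
  let u1 := u (inord 0) 0 in let u2 := u (inord 1) 0 in let u3 := u (inord 2) 0 in
  let v1 := v (inord 0) 0 in let v2 := v (inord 1) 0 in let v3 := v (inord 2) 0 in
  vec3 (u2 * v3 - u3 * v2) (u3 * v1 - u1 * v3) (u1 * v2 - u2 * v1).

Definition Xv {R : fieldType} (t : R) : 'cV[R]_3 := vec3 (t ^+ 2) t 1.

Definition bilin {R : fieldType} (A : 'M[R]_3) (x y : R) : R :=
  ((Xv x)^T *m A *m Xv y) 0 0.

Definition Iq {R : fieldType} (A0 A1 : 'M[R]_3) (x y : R) : R :=
  bilin A0 x y / bilin A1 x y.

Definition gvec {R : fieldType} (A0 A1 : 'M[R]_3) (x : R) : 'cV[R]_3 :=
  cross3 (A0^T *m Xv x) (A1^T *m Xv x).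
Definition g1 {R : fieldType} (A0 A1 : 'M[R]_3) x : R := gvec A0 A1 x (inord 0) 0.
Definition g2 {R : fieldType} (A0 A1 : 'M[R]_3) x : R := gvec A0 A1 x (inord 1) 0.
Definition g3 {R : fieldType} (A0 A1 : 'M[R]_3) x : R := gvec A0 A1 x (inord 2) 0.

(* Main.v *)
Require Import Defs.
From HB Require Import structures.
From mathcomp Require Import all_boot all_order all_algebra ring.
Import Order.TTheory GRing.Theory Num.Theory.
Local Open Scope ring_scope.

Lemma bilinE (R : fieldType) (a11 a12 a13 a21 a22 a23 a31 a32 a33 x y : R) :
  bilin (mat3 a11 a12 a13 a21 a22 a23 a31 a32 a33) x y =
  (a11 * y ^+ 2 + a12 * y + a13) * x ^+ 2 + (a21 * y ^+ 2 + a22 * y + a23) * x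
  + (a31 * y ^+ 2 + a32 * y + a33).
Proof.
rewrite /bilin /Xv /vec3 /mat3 !mxE.
rewrite !big_ord_recr big_ord0 /= !mxE.
rewrite !big_ord_recr !big_ord0 /= !mxE /=.
ring.
Qed.

Lemma gE (R : fieldType) (a11 a12 a13 a21 a22 a23 a31 a32 a33 b11 b12 b13 b21 b22 b23 b31 b32 b33 x : R) :
  let A := mat3 a11 a12 a13 a21 a22 a23 a31 a32 a33 in
  let B := mat3 b11 b12 b13 b21 b22 b23 b31 b32 b33 in
  let u0 := a11 * x ^+ 2 + a21 * x + a31 in
  let u1 := a12 * x ^+ 2 + a22 * x + a32 in
  let u2 := a13 * x ^+ 2 + a23 * x + a33 in
  let v0 := b11 * x ^+ 2 + b21 * x + b31 in
  let v1 := b12 * x ^+ 2 + b22 * x + b32 in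
  let v2 := b13 * x ^+ 2 + b23 * x + b33 in
  [/\ g1 A B x = u1 * v2 - u2 * v1, g2 A B x = u2 * v0 - u0 * v2
    & g3 A B x = u0 * v1 - u1 * v0].
Proof.
rewrite /g1 /g2 /g3 /gvec /cross3 /vec3 /Xv /mat3 !mxE ?inordK //=.
rewrite !big_ord_recr !big_ord0 /= !mxE /= ?inordK //=.
split; ring.

Qed.

Lemma quad_core (R : fieldType) (a d k a1 d1 k1 x : R) :
  2 * k * a1 - d * d1 + 2 * a * k1 = 0 ->
  a1 * (- (d * x + 2 * k)) ^+ 2 + d1 * (- (d * x + 2 * k)) * (2 * a * x + d)
   + k1 * (2 * a * x + d) ^+ 2 = - (4 * a * k - d ^+ 2) * (a1 * x ^+ 2 + d1 * x + k1).
Proof.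
move=> W; apply/eqP; rewrite -subr_eq0.
have -> : a1 * (- (d * x + 2 * k)) ^+ 2 + d1 * (- (d * x + 2 * k)) * (2 * a * x + d)
   + k1 * (2 * a * x + d) ^+ 2 - - (4 * a * k - d ^+ 2) * (a1 * x ^+ 2 + d1 * x + k1)
  = 2 * (2 * k * a1 - d * d1 + 2 * a * k1) * (a * x ^+ 2 + d * x + k) by ring.
by rewrite W mulr0 mul0r.
Qed.

Lemma quad_self (R : fieldType) (a d k x : R) :
  a * (- (d * x + 2 * k)) ^+ 2 + d * (- (d * x + 2 * k)) * (2 * a * x + d)
   + k * (2 * a * x + d) ^+ 2 = (4 * a * k - d ^+ 2) * (a * x ^+ 2 + d * x + k).
Proof. ring. Qed.

Lemma hom_eval (R : fieldType) (a d k N D : R) : D != 0 ->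
  a * (N / D) ^+ 2 + d * (N / D) + k = (a * N ^+ 2 + d * N * D + k * D ^+ 2) / D ^+ 2.
Proof. move=> HD; field; exact: HD. Qed.

Lemma hlemma (R : fieldType) (a d k a1 d1 k1 x : R) :
  2 * k * a1 - d * d1 + 2 * a * k1 = 0 ->
  2 * a * x + d != 0 ->
  a1 * x ^+ 2 + d1 * x + k1 != 0 ->
  let x' := - (d * x + 2 * k) / (2 * a * x + d) in
  a1 * x' ^+ 2 + d1 * x' + k1 != 0 ->
  (a * x' ^+ 2 + d * x' + k) / (a1 * x' ^+ 2 + d1 * x' + k1)
  = - ((a * x ^+ 2 + d * x + k) / (a1 * x ^+ 2 + d1 * x + k1)).
Proof.
move=> W HD H1 x'; rewrite /x' !hom_eval // quad_self quad_core // => H2.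
have Hc : 4 * a * k - d ^+ 2 != 0.
  by apply: contra H2 => /eqP ->; rewrite oppr0 !mul0r.
have HD2 : (2 * a * x + d) ^+ 2 != 0 by rewrite expf_neq0.
field. by rewrite H1 HD oppr_eq0 Hc.
Qed.

Lemma bilinE2 (R : fieldType) (a11 a12 a13 a21 a22 a23 a31 a32 a33 x y : R) :
  bilin (mat3 a11 a12 a13 a21 a22 a23 a31 a32 a33) x y =
  (a11 * x ^+ 2 + a21 * x + a31) * y ^+ 2 + (a12 * x ^+ 2 + a22 * x + a32) * y
  + (a13 * x ^+ 2 + a23 * x + a33).
Proof. rewrite bilinE; ring. Qed.

Ltac gtac := rewrite /g1 /g2 /g3 /gvec /cross3 /vec3 /Xv /mat3 !mxE ?inordK //=;
  rewrite !big_ord_recr !big_ord0 /= !mxE /= ?inordK //=; ring.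

Section G.
Variables (R : fieldType) (a11 a12 a13 a21 a22 a23 a31 a32 a33 b11 b12 b13 b21 b22 b23 b31 b32 b33 x : R).
Let A := mat3 a11 a12 a13 a21 a22 a23 a31 a32 a33.
Let B := mat3 b11 b12 b13 b21 b22 b23 b31 b32 b33.
Lemma g1E : g1 (mat3 a11 a12 a13 a21 a22 a23 a31 a32 a33) (mat3 b11 b12 b13 b21 b22 b23 b31 b32 b33) x =
  (a12 * x ^+ 2 + a22 * x + a32) * (b13 * x ^+ 2 + b23 * x + b33)
  - (a13 * x ^+ 2 + a23 * x + a33) * (b12 * x ^+ 2 + b22 * x + b32).
Proof. gtac. Qed.
Lemma g2E : g2 (mat3 a11 a12 a13 a21 a22 a23 a31 a32 a33) (mat3 b11 b12 b13 b21 b22 b23 b31 b32 b33) x =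
  (a13 * x ^+ 2 + a23 * x + a33) * (b11 * x ^+ 2 + b21 * x + b31)
  - (a11 * x ^+ 2 + a21 * x + a31) * (b13 * x ^+ 2 + b23 * x + b33).
Proof. gtac. Qed.
Lemma g3E : g3 (mat3 a11 a12 a13 a21 a22 a23 a31 a32 a33) (mat3 b11 b12 b13 b21 b22 b23 b31 b32 b33) x =
  (a11 * x ^+ 2 + a21 * x + a31) * (b12 * x ^+ 2 + b22 * x + b32)
  - (a12 * x ^+ 2 + a22 * x + a32) * (b11 * x ^+ 2 + b21 * x + b31).
Proof. gtac. Qed.
End G.

Lemma ilemma (R : fieldType) (u0 u1 u2 v0 v1 v2 y : R) :
  (u2 * v0 - u0 * v2) - (u0 * v1 - u1 * v0) * y != 0 ->
  v0 * y ^+ 2 + v1 * y + v2 != 0 ->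
  let y' := ((u1 * v2 - u2 * v1) - (u2 * v0 - u0 * v2) * y)
            / ((u2 * v0 - u0 * v2) - (u0 * v1 - u1 * v0) * y) in
  v0 * y' ^+ 2 + v1 * y' + v2 != 0 ->
  (u0 * y' ^+ 2 + u1 * y' + u2) / (v0 * y' ^+ 2 + v1 * y' + v2)
  = (u0 * y ^+ 2 + u1 * y + u2) / (v0 * y ^+ 2 + v1 * y + v2).
Proof.
set g1 := u1 * v2 - u2 * v1; set g2 := u2 * v0 - u0 * v2; set g3 := u0 * v1 - u1 * v0.
move=> HD H1 y'; rewrite /y' !hom_eval //.
have E : forall w0 w1 w2, w0 * g1 + w1 * g2 + w2 * g3 = 0 ->
  w0 * (g1 - g2 * y) ^+ 2 + w1 * (g1 - g2 * y) * (g2 - g3 * y) + w2 * (g2 - g3 * y) ^+ 2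
  = (g2 ^+ 2 - g1 * g3) * (w0 * y ^+ 2 + w1 * y + w2).
  move=> w0 w1 w2 G; apply/eqP; rewrite -subr_eq0.
  have -> : w0 * (g1 - g2 * y) ^+ 2 + w1 * (g1 - g2 * y) * (g2 - g3 * y) + w2 * (g2 - g3 * y) ^+ 2
   - (g2 ^+ 2 - g1 * g3) * (w0 * y ^+ 2 + w1 * y + w2)
   = (w0 * g1 + w1 * g2 + w2 * g3) * (g3 * y ^+ 2 - 2 * g2 * y + g1) by ring.
  by rewrite G mul0r.
rewrite !E; last 2 first.
- rewrite /g1 /g2 /g3; ring.
- rewrite /g1 /g2 /g3; ring.
move=> H2.
have Hc : g2 ^+ 2 - g1 * g3 != 0.
  by apply: contra H2 => /eqP ->; rewrite !mul0r.
field. by rewrite H1 HD Hc.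
Qed.

Lemma h2lemma (R : fieldType) (a d k a1 d1 k1 x : R) :
  2 * k * a1 - d * d1 + 2 * a * k1 = 0 ->
  2 * a1 * x + d1 != 0 ->
  a1 * x ^+ 2 + d1 * x + k1 != 0 ->
  let x' := - (d1 * x + 2 * k1) / (2 * a1 * x + d1) in
  a1 * x' ^+ 2 + d1 * x' + k1 != 0 ->
  (a * x' ^+ 2 + d * x' + k) / (a1 * x' ^+ 2 + d1 * x' + k1)
  = - ((a * x ^+ 2 + d * x + k) / (a1 * x ^+ 2 + d1 * x + k1)).
Proof.
move=> W HD H1 x'; rewrite /x' !hom_eval // quad_self quad_core; last first.
  by rewrite -W; ring.
move=> H2.
have Hc : 4 * a1 * k1 - d1 ^+ 2 != 0.
  by apply: contra H2 => /eqP ->; rewrite !mul0r.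
field. by rewrite H1 HD Hc.
Qed.

Theorem proposition2 (R : fieldType)
  (al be ga de ep ze ka la mu b c f m : R) :
  let al1 := 2 * al ^+ 2 * f - c * al * de + be * de * b - b * al * ep in
  let be1 := 2 * f * al * be + b * ga * de - c * al * ep - b * al * ze in
  let ga1 := 2 * f * al * ga - c * al * ze in
  let de1 := 2 * m * al ^+ 2 - 2 * c * al * ka + 2 * b * be * ka - 2 * b * al * la in
  let ep1 := 2 * m * al * be + 2 * b * ga * ka - 2 * c * al * la - 2 * b * al * mu in
  let ze1 := 2 * m * al * ga - 2 * c * al * mu in
  let ka1 := m * al * de - 2 * f * al * ka + b * ep * ka - b * de * la in
  let la1 := m * al * ep + b * ze * ka - 2 * f * al * la - b * de * mu in
  let mu1 := m * al * ze - 2 * f * al * mu in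
  let A0 := mat3 al be ga de ep ze ka la mu in
  let A1 := mat3 al1 be1 ga1 de1 ep1 ze1 ka1 la1 mu1 in
  let I := Iq A0 A1 in
  let i2 := fun x y : R =>
    (x, (g1 A0 A1 x - g2 A0 A1 x * y) / (g2 A0 A1 x - g3 A0 A1 x * y)) in
  let h1 := fun x y : R =>
    (- ((de * y ^+ 2 + ep * y + ze) * x + 2 * (ka * y ^+ 2 + la * y + mu))
       / (2 * (al * y ^+ 2 + be * y + ga) * x + (de * y ^+ 2 + ep * y + ze)), y) in
  let h2 := fun x y : R =>
    (- ((de1 * y ^+ 2 + ep1 * y + ze1) * x + 2 * (ka1 * y ^+ 2 + la1 * y + mu1))
       / (2 * (al1 * y ^+ 2 + be1 * y + ga1) * x + (de1 * y ^+ 2 + ep1 * y + ze1)), y) in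
  (forall x y : R,
     g2 A0 A1 x - g3 A0 A1 x * y != 0 ->
     bilin A1 x y != 0 ->
     bilin A1 (i2 x y).1 (i2 x y).2 != 0 ->
     I (i2 x y).1 (i2 x y).2 = I x y)
  /\
  (forall x y : R,
     2 * (al * y ^+ 2 + be * y + ga) * x + (de * y ^+ 2 + ep * y + ze) != 0 ->
     bilin A1 x y != 0 ->
     bilin A1 (h1 x y).1 (h1 x y).2 != 0 ->
     I (h1 x y).1 (h1 x y).2 = - I x y)
  /\
  (forall x y : R,
     2 * (al1 * y ^+ 2 + be1 * y + ga1) * x + (de1 * y ^+ 2 + ep1 * y + ze1) != 0 ->
     bilin A1 x y != 0 ->
     bilin A1 (h2 x y).1 (h2 x y).2 != 0 ->
     I (h2 x y).1 (h2 x y).2 = - I x y).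
Proof.
move=> al1 be1 ga1 de1 ep1 ze1 ka1 la1 mu1 A0 A1 I i2 h1 h2.
have W : forall y : R,
  2 * (ka * y ^+ 2 + la * y + mu) * (al1 * y ^+ 2 + be1 * y + ga1)
  - (de * y ^+ 2 + ep * y + ze) * (de1 * y ^+ 2 + ep1 * y + ze1)
  + 2 * (al * y ^+ 2 + be * y + ga) * (ka1 * y ^+ 2 + la1 * y + mu1) = 0.
  move=> y; rewrite /al1 /be1 /ga1 /de1 /ep1 /ze1 /ka1 /la1 /mu1; ring.
split; [|split].
- move=> x y; rewrite /i2 /I /Iq /A0 /A1 /= !bilinE2 g1E g2E g3E.
  move=> HD H1 H2. exact (ilemma _ _ _ _ _ _ _ _ HD H1 H2).
- move=> x y; rewrite /h1 /I /Iq /A0 /A1 /= !bilinE.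
  move=> HD H1 H2; exact (hlemma _ _ _ _ _ _ _ _ (W y) HD H1 H2).
- move=> x y; rewrite /h2 /I /Iq /A0 /A1 /= !bilinE.
  move=> HD H1 H2; exact (h2lemma _ _ _ _ _ _ _ _ (W y) HD H1 H2).
Qed.
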